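(* Let $N$ be a plain structural conflict Petri net. If $N$ has a fully reachable pure $\mathsf M$, then $N$ is not distributable up to step failures equivalence, i.e. there is no distributed Petri net $D$ with $D\approx_{\mathscr F}N$.
   Context: Fix a set $\mathrm{Act}$ of visible actions and an invisible action $\tau\notin\mathrm{Act}$. A (labelled) Petri net is $N=(S,T,F,M_0,\ell)$ with $S,T$ disjoint, $F:(S\times T)\cup(T\times S)\to\mathbb N$, $M_0\in\mathbb N^S$, $\ell:T\to\mathrm{Act}\cup\{\tau\}$. ${}^\bullet x(y)=F(y,x)$, $x^\bullet(y)=F(x,y)$, extended additively to finite multisets; multiset $\le,\cap,\cup$ pointwise $\le$, min, max. For finite nonempty multiset $G$ of transitions, $M[G\rangle M'$ iff ${}^\bullet G\le M$ and $M'=M-{}^\bullet G+G^\bullet$. Reachable markings: closure of $\{M_0\}$ under steps. $t\smile u$ iff $M[\{t\}+\{u\}\rangle$ for a reachable $M$. Structural conflict net: $t\smile u\Rightarrow{}^\bullet t\cap{}^\bullet u=\emptyset$. Plain: $\ell$ injective and never $\tau$. Fully reachable pure $\mathsf M$: $t,u,v\in T$ with ${}^\bullet t\cap{}^\bullet u\neq\emptyset$, ${}^\bullet u\cap{}^\bullet v\neq\emptyset$, ${}^\bullet t\cap{}^\bullet v=\emptyset$, and a reachable $M$ with ${}^\bullet t\cup{}^\bullet u\cup{}^\bullet v\le M$. Distributed net: there is a function $D$ on $S\cup T$ with (1) $s\in{}^\bullet t\Rightarrow D(t)=D(s)$, (2) $t\smile u\Rightarrow D(t)\neq D(u)$. Step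 failures equivalence: $M\xrightarrow{\alpha}M'$ iff $M[t\rangle M'$ with $\ell(t)=\alpha$; $\Rightarrow$ is the reflexive transitive closure of $\xrightarrow{\tau}$; $M\overset{a_1\cdots a_n}{\Longrightarrow}M'$ iff $M\Rightarrow\xrightarrow{a_1}\Rightarrow\cdots\xrightarrow{a_n}\Rightarrow M'$. For a step $A$ (finite nonempty multiset over $\mathrm{Act}$), $M\xrightarrow{A}$ iff $M[G\rangle$ for a finite multiset $G$ of transitions, none labelled $\tau$, whose label multiset is $A$. $(\sigma,X)$, $\sigma\in\mathrm{Act}^*$, $X$ a finite set of steps, is a step failure pair iff some $M$ has $M_0\overset{\sigma}{\Longrightarrow}M$, $M\not\xrightarrow{\tau}$, and $M\not\xrightarrow{A}$ for all $A\in X$. $N_1\approx_{\mathscr F}N_2$ iff they have the same step failure pairs. *)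

(* Defs.v *)
From Stdlib Require Import List Permutation Arith.
Import ListNotations.

Section PetriNets.
Variable Act : Type.  (* visible actions; tau is represented by [None] *)

(* N = (S, T, F, M0, l); F is split into pre (S x T) and post (T x S). *)
Record net := mkNet {
  place : Type;
  trans : Type;
  pre   : place -> trans -> nat;
  post  : trans -> place -> nat;
  m0    : place -> nat;
  lab   : trans -> option Act
}.

Definition marking (N : net) := place N -> nat.

(* finite multisets of transitions are represented by lists *)
Definition presetG (N : net) (G : list (trans N)) : marking N :=
  fun s => fold_right (fun t acc => pre N s t + acc) 0 G.
Definition postsetG (N : net) (G : list (trans N)) : marking N :=
  fun s => fold_right (fun t acc => post N t s + acc) 0 G.

Definition mle (N : net) (M M' : marking N) : Prop := forall s, M s <= M' s.

Definition fires (N : net) (M : marking N) (G : list (trans N)) (M' : marking N) : Prop :=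
  G <> [] /\ mle N (presetG N G) M /\
  forall s, M' s = M s - presetG N G s + postsetG N G s.

Inductive reachable (N : net) : marking N -> Prop :=
| reach_init : reachable N (m0 N)
| reach_step : forall M G M', reachable N M -> fires N M G M' -> reachable N M'.

Definition concurrent (N : net) (t u : trans N) : Prop :=
  exists M, reachable N M /\ mle N (presetG N [t; u]) M.

Definition structural_conflict (N : net) : Prop :=
  forall t u : trans N, concurrent N t u -> forall s, pre N s t = 0 \/ pre N s u = 0.

Definition plain (N : net) : Prop :=
  (forall t, lab N t <> None) /\ (forall t u, lab N t = lab N u -> t = u).

Definition fully_reachable_pure_M (N : net) : Prop :=
  exists t u v : trans N,
    (exists s, 0 < pre N s t /\ 0 < pre N s u) /\
    (exists s, 0 < pre N s u /\ 0 < pre N s v) /\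
    (forall s, pre N s t = 0 \/ pre N s v = 0) /\
    exists M, reachable N M /\
      forall s, Nat.max (Nat.max (pre N s t) (pre N s u)) (pre N s v) <= M s.

Definition distributed (N : net) : Prop :=
  exists (Loc : Type) (D : place N + trans N -> Loc),
    (forall s t, 0 < pre N s t -> D (inr t) = D (inl s)) /\
    (forall t u, concurrent N t u -> D (inr t) <> D (inr u)).

Definition step1 (N : net) (M : marking N) (a : option Act) (M' : marking N) : Prop :=
  exists t, lab N t = a /\ fires N M [t] M'.

Inductive tau_star (N : net) : marking N -> marking N -> Prop :=
| tau_refl : forall M, tau_star N M M
| tau_next : forall M M1 M', step1 N M None M1 -> tau_star N M1 M' -> tau_star N M M'.

Inductive wtrace (N : net) : list Act -> marking N -> marking N -> Prop :=
| wt_nil : forall M M', tau_star N M M' -> wtrace N [] M M'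
| wt_cons : forall a sigma M M1 M2 M',
    tau_star N M M1 -> step1 N M1 (Some a) M2 -> wtrace N sigma M2 M' ->
    wtrace N (a :: sigma) M M'.

(* M --A--> for a step A (finite nonempty multiset over Act, given as a list) *)
Definition step_enabled (N : net) (M : marking N) (A : list Act) : Prop :=
  exists G : list (trans N), G <> [] /\
    Permutation (map (lab N) G) (map (@Some Act) A) /\ mle N (presetG N G) M.

Definition step_failure (N : net) (sigma : list Act) (X : list (list Act)) : Prop :=
  Forall (fun A => A <> []) X /\
  exists M, wtrace N sigma (m0 N) M /\
    ~ (exists M', step1 N M None M') /\
    Forall (fun A => ~ step_enabled N M A) X.

Definition sf_equiv (N1 N2 : net) : Prop :=
  forall sigma X, step_failure N1 sigma X <-> step_failure N2 sigma X.

End PetriNets.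

(* Main.v *)
Require Import Defs.
From Stdlib Require Import List Permutation Arith Lia Classical FunctionalExtensionality.
Import ListNotations.

Section Aux.
Variable Act : Type.

Lemma perm2 (N : net Act) (G : list (trans Act N)) x y :
  Permutation (map (lab Act N) G) [x; y] ->
  exists g1 g2, G = [g1; g2] /\ ((lab Act N g1 = x /\ lab Act N g2 = y) \/ (lab Act N g1 = y /\ lab Act N g2 = x)).
Proof.
  intros H. apply Permutation_sym in H. destruct (Permutation_length_2_inv H) as [E|E];
  destruct G as [|g1 [|g2 [|g3 G]]]; simpl in E; try discriminate;
  injection E as E1 E2; exists g1, g2; split; auto.
Qed.

Lemma perm1 (N : net Act) (G : list (trans Act N)) x :
  Permutation (map (lab Act N) G) [x] -> exists g, G = [g] /\ lab Act N g = x.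
Proof.
  intros H. apply Permutation_sym in H. pose proof (Permutation_length_1_inv H) as E.
  destruct G as [|g1 [|g2 G]]; simpl in E; try discriminate.
  injection E as E1; exists g1; split; auto.
Qed.

Lemma tau_reach N M M' : tau_star Act N M M' -> reachable Act N M -> reachable Act N M'.
Proof.
  induction 1; intros R; auto. apply IHtau_star. destruct H as [t [_ Hf]].
  eapply reach_step; eauto.
Qed.

Lemma wtrace_reach N s M M' : wtrace Act N s M M' -> reachable Act N M -> reachable Act N M'.
Proof.
  induction 1; intros R. eapply tau_reach; eauto. apply IHwtrace.
  destruct H0 as [t [_ Hf]]. eapply reach_step; [eapply tau_reach; eauto | exact Hf].
Qed.

Lemma tau_trans N M M1 M2 : tau_star Act N M M1 -> tau_star Act N M1 M2 -> tau_star Act N M M2.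
Proof. induction 1; intros; auto. eapply tau_next; eauto. Qed.

Lemma wtrace_pre N s M M1 M2 : tau_star Act N M M1 -> wtrace Act N s M1 M2 -> wtrace Act N s M M2.
Proof.
  intros H1 H2. inversion H2; subst.
  - constructor. eapply tau_trans; eauto.
  - eapply wt_cons; [eapply tau_trans; eauto | eauto | eauto].
Qed.

Lemma wtrace_app N s1 s2 M M1 M2 : wtrace Act N s1 M M1 -> wtrace Act N s2 M1 M2 ->
  wtrace Act N (s1 ++ s2) M M2.
Proof.
  intros H1. revert M2. induction H1; intros M2' H2; simpl.
  - eapply wtrace_pre; eauto.
  - eapply wt_cons; eauto.
Qed.

Lemma tau_plain N M M' : plain Act N -> tau_star Act N M M' -> M' = M.
Proof. intros [Hp _] H. destruct H; auto. destruct H as [t [Ht _]]. exfalso; exact (Hp t Ht). Qed.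

Lemma wtrace_det N : plain Act N -> forall s M M1 M2,
  wtrace Act N s M M1 -> wtrace Act N s M M2 -> M1 = M2.
Proof.
  intros Hp s M M1 M2 H1. revert M2. induction H1; intros M2' H2; inversion H2; subst.
  - apply tau_plain in H; auto. apply tau_plain in H0; auto. congruence.
  - match goal with
    | T1 : tau_star _ _ ?A M1, S1 : step1 _ _ M1 _ M2, T2 : tau_star _ _ ?A ?B, S2 : step1 _ _ ?B _ ?C |- _ =>
        apply tau_plain in T1; auto; apply tau_plain in T2; auto; subst;
        destruct S1 as [x [Lx [_ [_ F1]]]]; destruct S2 as [y [Ly [_ [_ F2]]]]
    end.
    assert (x = y) by (apply (proj2 Hp); congruence). subst y.
    match goal with H : wtrace _ _ _ ?C _ |- _ =>
      assert (M2 = C) by (apply functional_extensionality; intro s; rewrite F1, F2; reflexivity) end.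
    subst. apply IHwtrace; auto.
Qed.

Lemma seq_fire N : plain Act N -> forall G M, mle Act N (presetG Act N G) M ->
  exists sigma, wtrace Act N sigma M (fun s => M s - presetG Act N G s + postsetG Act N G s).
Proof.
  intros Hp. induction G as [|g G IH]; intros M Hle.
  - exists []. replace (fun s => M s - presetG Act N [] s + postsetG Act N [] s) with M.
    constructor; constructor. apply functional_extensionality; intro s; simpl; lia.
  - set (M1 := fun s => M s - pre Act N s g + post Act N g s).
    destruct (IH M1) as [sigma Hs].
    { intro s. specialize (Hle s). simpl in Hle. unfold M1. lia. }
    destruct Hp as [Hp1 Hp2].
    destruct (lab Act N g) as [a|] eqn:Hg; [|exfalso; now apply (Hp1 g)].
    exists (a :: sigma). eapply (wt_cons Act N a sigma M M M1). constructor.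
    + exists g. split; [exact Hg|]. split; [discriminate|]. split.
      * intro s; specialize (Hle s); simpl in *; lia.
      * intro s. unfold M1. unfold presetG, postsetG. simpl. lia.
    + replace (fun s => M s - presetG Act N (g :: G) s + postsetG Act N (g :: G) s)
        with (fun s => M1 s - presetG Act N G s + postsetG Act N G s). exact Hs.
      apply functional_extensionality; intro s; specialize (Hle s); simpl in *; unfold M1; lia.
Qed.

Lemma reach_trace N : plain Act N -> forall M, reachable Act N M ->
  exists sigma, wtrace Act N sigma (m0 Act N) M.
Proof.
  intros Hp M H. induction H.
  - exists []. constructor; constructor.
  - destruct IHreachable as [s1 H1]. destruct H0 as [_ [Hle HM]].
    destruct (seq_fire N Hp G M Hle) as [s2 H2].
    replace (fun s => M s - presetG Act N G s + postsetG Act N G s) with M' in H2.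
    exists (s1 ++ s2). eapply wtrace_app; eauto.
    apply functional_extensionality; intro s; rewrite HM; reflexivity.
Qed.

Lemma share (D : net Act) Loc (DL : place Act D + trans Act D -> Loc) M x y A :
  (forall s t, 0 < pre Act D s t -> DL (inr t) = DL (inl s)) ->
  mle Act D (presetG Act D [x]) M -> mle Act D (presetG Act D [y]) M ->
  Permutation (map (lab Act D) [x;y]) (map (@Some Act) A) -> ~ step_enabled Act D M A ->
  DL (inr x) = DL (inr y).
Proof.
  intros HD1 Hx Hy HP Hn. apply NNPP; intro Hne. apply Hn. exists [x;y].
  split; [discriminate|]. split; [exact HP|].
  intro s. specialize (Hx s); specialize (Hy s). simpl in *.
  destruct (Nat.eq_dec (pre Act D s x) 0); [lia|].
  destruct (Nat.eq_dec (pre Act D s y) 0); [lia|].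
  exfalso; apply Hne. rewrite (HD1 s x), (HD1 s y); auto; lia.
Qed.

End Aux.

Theorem theorem5p6 (Act : Type) (N : net Act) :
  plain Act N -> structural_conflict Act N -> fully_reachable_pure_M Act N ->
  ~ (exists D : net Act, distributed Act D /\ sf_equiv Act D N).
Proof.
  intros Hp Hsc [t [u [v [[s1 [Hs1t Hs1u]] [[s2 [Hs2u Hs2v]] [Htv [M [HM HMle]]]]]]]]
    [D [[Loc [DL [HD1 HD2]]] Heq]].
  pose proof Hp as [Hp1 Hp2].
  destruct (lab Act N t) as [a|] eqn:Ha; [|exfalso; now apply (Hp1 t)].
  destruct (lab Act N u) as [b|] eqn:Hb; [|exfalso; now apply (Hp1 u)].
  destruct (lab Act N v) as [c|] eqn:Hc; [|exfalso; now apply (Hp1 v)].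
  destruct (reach_trace Act N Hp M HM) as [sigma Hsig].
  assert (Hstab : ~ (exists M', step1 Act N M None M')).
  { intros [M' [x [Hx _]]]. exact (Hp1 x Hx). }
  assert (HNb : step_enabled Act N M [b]).
  { exists [u]. split; [discriminate|]. split.
    simpl; rewrite Hb; apply Permutation_refl.
    intro s; specialize (HMle s); simpl; lia. }
  assert (HNac : step_enabled Act N M [a;c]).
  { exists [t;v]. split; [discriminate|]. split.
    simpl; rewrite Ha, Hc; apply Permutation_refl.
    intro s; specialize (HMle s); specialize (Htv s); simpl; lia. }
  assert (Hnab : ~ step_enabled Act N M [a;b]).
  { intros [G [_ [Hperm Hle]]]. simpl in Hperm.
    destruct (perm2 Act N G _ _ Hperm) as [g1 [g2 [-> [[E1 E2]|[E1 E2]]]]].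
    - rewrite <- Ha in E1; rewrite <- Hb in E2. apply Hp2 in E1. apply Hp2 in E2. subst.
      destruct (Hsc t u (ex_intro _ M (conj HM Hle)) s1); lia.
    - rewrite <- Ha in E2; rewrite <- Hb in E1. apply Hp2 in E1. apply Hp2 in E2. subst.
      destruct (Hsc u t (ex_intro _ M (conj HM Hle)) s1); lia. }
  assert (Hnbc : ~ step_enabled Act N M [b;c]).
  { intros [G [_ [Hperm Hle]]]. simpl in Hperm.
    destruct (perm2 Act N G _ _ Hperm) as [g1 [g2 [-> [[E1 E2]|[E1 E2]]]]].
    - rewrite <- Hb in E1; rewrite <- Hc in E2. apply Hp2 in E1. apply Hp2 in E2. subst.
      destruct (Hsc u v (ex_intro _ M (conj HM Hle)) s2); lia.
    - rewrite <- Hb in E2; rewrite <- Hc in E1. apply Hp2 in E1. apply Hp2 in E2. subst.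
      destruct (Hsc v u (ex_intro _ M (conj HM Hle)) s2); lia. }
  assert (HfN : step_failure Act N sigma [[a;b];[b;c]]).
  { split. repeat constructor; discriminate.
    exists M. split; [exact Hsig|]. split; [exact Hstab|]. repeat constructor; assumption. }
  apply Heq in HfN. destruct HfN as [_ [MD [HwD [HstD HFD]]]].
  inversion HFD as [|? ? HnabD HF2]; subst. inversion HF2 as [|? ? HnbcD _]; subst.
  assert (HRD : reachable Act D MD) by (eapply wtrace_reach; [exact HwD | apply reach_init]).
  assert (HDb : ~ ~ step_enabled Act D MD [b]).
  { intro Hn. assert (Hf : step_failure Act D sigma [[b]]).
    { split; [repeat constructor; discriminate|].
      exists MD; split; [exact HwD|split; [exact HstD| constructor; [exact Hn|constructor]]]. }
    apply Heq in Hf. destruct Hf as [_ [M2 [Hw2 [_ HF]]]].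
    assert (M2 = M) by (eapply wtrace_det; eauto). subst M2.
    inversion HF; contradiction. }
  assert (HDac : ~ ~ step_enabled Act D MD [a;c]).
  { intro Hn. assert (Hf : step_failure Act D sigma [[a;c]]).
    { split; [repeat constructor; discriminate|].
      exists MD; split; [exact HwD|split; [exact HstD| constructor; [exact Hn|constructor]]]. }
    apply Heq in Hf. destruct Hf as [_ [M2 [Hw2 [_ HF]]]].
    assert (M2 = M) by (eapply wtrace_det; eauto). subst M2.
    inversion HF; contradiction. }
  apply HDb; intro HDb'. apply HDac; intro HDac'.
  destruct HDb' as [G1 [_ [P1 L1]]]. simpl in P1.
  destruct (perm1 Act D G1 _ P1) as [u' [-> Lu']].
  destruct HDac' as [G2 [_ [P2 L2]]]. simpl in P2.
  destruct (perm2 Act D G2 _ _ P2) as [g1 [g2 [-> Hlab]]].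
  assert (exists t' v', lab Act D t' = Some a /\ lab Act D v' = Some c /\
            mle Act D (presetG Act D [t';v']) MD) as [t' [v' [Lt [Lv Hle]]]].
  { destruct Hlab as [[E1 E2]|[E1 E2]]; [exists g1, g2 | exists g2, g1];
      repeat split; auto; intros s; specialize (L2 s); simpl in *; lia. }
  assert (Hcc : concurrent Act D t' v') by (exists MD; split; auto).
  assert (Ht' : mle Act D (presetG Act D [t']) MD) by (intro s; specialize (Hle s); simpl in *; lia).
  assert (Hv' : mle Act D (presetG Act D [v']) MD) by (intro s; specialize (Hle s); simpl in *; lia).
  assert (E1 : DL (inr t') = DL (inr u')).
  { eapply (share Act D Loc DL MD t' u' [a;b]); eauto. simpl; rewrite Lt, Lu'; apply Permutation_refl. }
  assert (E2 : DL (inr u') = DL (inr v')).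
  { eapply (share Act D Loc DL MD u' v' [b;c]); eauto. simpl; rewrite Lv, Lu'; apply Permutation_refl. }
  apply (HD2 t' v' Hcc). congruence.
Qed.
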